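(* Let $M$ be a matroid of rank at least $1$ having two disjoint bases. Then $\chi(\operatorname{KG}(M))=f(M)$.
   Context: The matroid Kneser graph $\operatorname{KG}(M)$ has the bases of $M$ as vertices, two bases being adjacent when they are disjoint; $\chi$ denotes chromatic number. For a matroid $M$, $\mathcal{B}(M)$ denotes its set of bases, and the distance between two bases $B,B'$ is $|B\triangle B'|$; $\operatorname{diam}$ denotes diameter. The Borsuk number $f(M)$ is the minimum number of parts in a partition of $\mathcal{B}(M)$ in which every part has diameter strictly smaller than $\operatorname{diam}(\mathcal{B}(M))$; if $M$ has exactly one basis, $f(M):=+\infty$. *)

(* Defs.v *)
From mathcomp Require Import all_boot.
Set Implicit Arguments. Unset Strict Implicit. Unset Printing Implicit Defensive.

Record matroid (T : finType) := Matroid {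
  bases : {set {set T}};
  bases_nonempty : bases != set0;
  bases_exchange : forall B1 B2, B1 \in bases -> B2 \in bases ->
    forall x, x \in B1 :\: B2 ->
    exists2 y, y \in B2 :\: B1 & y |: (B1 :\ x) \in bases
}.

Section Defs.
Variable T : finType.
Implicit Types (M : matroid T) (S : {set {set T}}) (B : {set T}).

Definition rank M : nat :=
  if [pick B in bases M] is Some B then #|B| else 0.

Definition bdist B B' : nat := #|(B :\: B') :|: (B' :\: B)|.

Definition diam S : nat := \max_(B in S) \max_(B' in S) bdist B B'.

Definition kg_adj M B B' : bool :=
  [&& B \in bases M, B' \in bases M & [disjoint B & B']].

Definition kg_colorable M (k : nat) : bool :=
  [exists c : {ffun {set T} -> 'I_k},
     [forall B, forall B', kg_adj M B B' ==> (c B != c B')]].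

(* chromatic number of KG(M); None if no proper colouring exists
   (only possible when KG(M) has a loop, i.e. the empty basis). Any proper
   colouring can be taken with at most #|{set T}| colours, so the search
   range is complete. *)
Definition chi_KG M : option nat :=
  omap (@nat_of_ord _)
    [pick k : 'I_(#|{set T}|.+1) | kg_colorable M k &&
       [forall j : 'I_(#|{set T}|.+1), (j < k) ==> ~~ kg_colorable M j]].

Definition borsuk_partitionable M (k : nat) : bool :=
  [exists P : {set {set {set T}}},
     [&& partition P (bases M), #|P| == k &
         [forall S in P, diam S < diam (bases M)]]].

(* Borsuk number f(M); None encodes +infinity (M has exactly one basis).
   A partition has at most #|bases M| <= #|{set T}| parts. *)
Definition borsuk M : option nat :=
  if #|bases M| == 1 then None
  else omap (@nat_of_ord _)
    [pick k : 'I_(#|{set T}|.+1) | borsuk_partitionable M k &&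
       [forall j : 'I_(#|{set T}|.+1), (j < k) ==> ~~ borsuk_partitionable M j]].

End Defs.

(* Main.v *)
Require Import Defs.
From mathcomp Require Import all_boot.
From mathcomp Require Import zify.
Set Implicit Arguments. Unset Strict Implicit. Unset Printing Implicit Defensive.

Section Aux.
Variable T : finType.
Variable M : matroid T.

Lemma le_card_bases B1 B2 : B1 \in bases M -> B2 \in bases M -> #|B1| <= #|B2|.
Proof.
move=> h1 h2; move: {2}#|B1 :\: B2| (erefl #|B1 :\: B2|) => n.
elim: n B1 h1 => [|n IH] B1 h1 hn.
  apply: subset_leq_card; rewrite -setD_eq0 -cards_eq0; apply/eqP; exact: hn.
have : 0 < #|B1 :\: B2| by rewrite hn.
rewrite card_gt0 => /set0Pn [x hx].
have [y hy hB] := bases_exchange h1 h2 hx.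
move: hx hy; rewrite !inE => /andP[xB2 xB1] /andP[yB1 yB2].
have -> : #|B1| = #|y |: (B1 :\ x)|.
  by rewrite cardsU1 (cardsD1 x B1) xB1 !inE (negbTE yB1) andbF.
apply: IH => //.
have -> : (y |: (B1 :\ x)) :\: B2 = (B1 :\: B2) :\ x.
  apply/setP => z; rewrite !inE; case: (eqVneq z y) => [->|]; first by rewrite yB2 !andbF.
  by rewrite orFb; case: (z \in B2); case: (z == x); case: (z \in B1).
have : x \in B1 :\: B2 by rewrite !inE xB2 xB1.
move=> hx; move: hn; rewrite (cardsD1 x (B1 :\: B2)) hx; lia.
Qed.

Lemma card_basis B : B \in bases M -> #|B| = rank M.
Proof.
move=> hB; rewrite /rank; case: pickP => [B' /= hB'|h].
  by apply/eqP; rewrite eqn_leq !le_card_bases.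
by move: (h B); rewrite hB.
Qed.

Lemma bdist_bases B B' : B \in bases M -> B' \in bases M ->
  bdist B B' + 2 * #|B :&: B'| = 2 * rank M.
Proof.
move=> h h'; rewrite /bdist cardsU.
have -> : (B :\: B') :&: (B' :\: B) = set0.
  by apply/setP => z; rewrite !inE; case: (z \in B); case: (z \in B').
rewrite cards0 subn0.
have e1 := cardsID B' B. have e2 := cardsID B B'.
rewrite setIC in e2.
have c1 := card_basis h; have c2 := card_basis h'; lia.
Qed.

Lemma bdist_le B B' : B \in bases M -> B' \in bases M -> bdist B B' <= 2 * rank M.
Proof. move=> h h'; have := bdist_bases h h'; lia. Qed.

Lemma bdist_eq B B' : B \in bases M -> B' \in bases M ->
  (bdist B B' == 2 * rank M) = [disjoint B & B'].
Proof.
move=> h h'; have := bdist_bases h h'; rewrite -setI_eq0 -cards_eq0 => e.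
apply/eqP/eqP; lia.
Qed.

Lemma diam_bases B1 B2 : B1 \in bases M -> B2 \in bases M -> [disjoint B1 & B2] ->
  diam (bases M) = 2 * rank M.
Proof.
move=> h1 h2 d; apply/eqP; rewrite eqn_leq; apply/andP; split.
  apply/bigmax_leqP => B hB; apply/bigmax_leqP => B' hB'; exact: bdist_le.
apply: leq_trans (leq_bigmax_cond _ h1).
apply: leq_trans (leq_bigmax_cond _ h2).
by rewrite (eqP (_ : bdist B1 B2 == 2 * rank M)) // bdist_eq.
Qed.


Lemma part_of_fun (X : eqType) (f : {set T} -> X) :
  diam (bases M) = 2 * rank M -> 1 <= rank M ->
  (forall B B', B \in bases M -> B' \in bases M -> f B = f B' -> ~~ [disjoint B & B']) ->
  borsuk_partitionable M #|preim_partition f (bases M)|.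
Proof.
move=> hd hr H; apply/existsP; exists (preim_partition f (bases M)).
rewrite preim_partitionP eqxx /=; apply/forallP => S; apply/implyP => /imsetP [B0 hB0 ->].
rewrite hd; apply: (@leq_ltn_trans (2 * rank M).-1); last by lia.
apply/bigmax_leqP => B; rewrite inE => /andP[hB e1].
apply/bigmax_leqP => B'; rewrite inE => /andP[hB' e2].
have nd := H B B' hB hB' (etrans (esym (eqP e1)) (eqP e2)).
have := bdist_le hB hB'; have := bdist_eq hB hB'; rewrite (negbTE nd) => /eqP; lia.
Qed.

Lemma colour_from_part k : diam (bases M) = 2 * rank M ->
  borsuk_partitionable M k -> kg_colorable M k.
Proof.
move=> hd /existsP [P /and3P [hP /eqP hk /forallP hS]].
have [/eqP hcov _ _] := and3P hP.
case: k hk => [|k] hk.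
  have /set0Pn [B0 hB0] := bases_nonempty M.
  rewrite -hcov in hB0; have := pblock_mem hB0 => hp.
  have : 0 < #|P| by apply/card_gt0P; exists (pblock P B0).
  by rewrite hk.
apply/existsP; exists [ffun B => inord (index (pblock P B) (enum P)) : 'I_k.+1].
apply/forallP=> B; apply/forallP => B'; apply/implyP => /and3P[hB hB' hdis].
rewrite !ffunE; apply/negP => /eqP e.
have mB : pblock P B \in P by rewrite pblock_mem // hcov.
have mB' : pblock P B' \in P by rewrite pblock_mem // hcov.
have iB : index (pblock P B) (enum P) < k.+1 by rewrite -hk cardE index_mem mem_enum.
have iB' : index (pblock P B') (enum P) < k.+1 by rewrite -hk cardE index_mem mem_enum.
have e' := congr1 val e; rewrite /= !inordK // in e'.
have ep : pblock P B = pblock P B'.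
  by rewrite -[pblock P B](nth_index set0 (_ : _ \in enum P)) ?mem_enum // e' nth_index // mem_enum.
have := hS (pblock P B); rewrite mB /= hd.
have inB : B \in pblock P B by rewrite mem_pblock hcov.
have inB' : B' \in pblock P B by rewrite ep mem_pblock hcov.
have le1 : bdist B B' <= diam (pblock P B).
  rewrite /diam; apply: leq_trans (leq_bigmax_cond _ inB).
  by apply: leq_bigmax_cond inB'.
rewrite (eqP (_ : bdist B B' == 2 * rank M)) in le1; last by rewrite bdist_eq.
by rewrite ltnNge le1.
Qed.

Lemma part_from_colour k : diam (bases M) = 2 * rank M -> 1 <= rank M ->
  kg_colorable M k -> exists2 j, j <= k & borsuk_partitionable M j.
Proof.
move=> hd hr /existsP [c /forallP hc].
exists #|preim_partition c (bases M)|; last first.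
  apply: part_of_fun => // B B' hB hB' e; apply/negP => hdis.
  have := hc B => /forallP /(_ B') /implyP; rewrite /kg_adj hB hB' hdis e eqxx.
  by move=> /(_ isT).
have -> : preim_partition c (bases M) =
  (fun i => [set y in bases M | i == c y]) @: (c @: bases M) by rewrite -imset_comp.
apply: leq_trans (leq_imset_card _ _) _.
by apply: leq_trans (max_card _) _; rewrite card_ord.
Qed.

Lemma part_exists : diam (bases M) = 2 * rank M -> 1 <= rank M ->
  exists2 j, j <= #|{set T}| & borsuk_partitionable M j.
Proof.
move=> hd hr; exists #|preim_partition id (bases M)|; last first.
  apply: part_of_fun => // B B' hB hB' /= <-.
  rewrite -setI_eq0 setIid -card_gt0 card_basis //.
apply: leq_trans (leq_imset_card _ _) _; exact: max_card.
Qed.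

End Aux.

Lemma pick_eq_min N (R : nat -> bool) m : m <= N -> R m -> (forall j, j < m -> ~~ R j) ->
  omap (@nat_of_ord _) [pick k : 'I_N.+1 | R k && [forall j : 'I_N.+1, (j < k) ==> ~~ R j]]
  = Some m.
Proof.
move=> hm Rm hlt; case: pickP => [k /andP[Rk /forallP hk] | h] /=.
  congr Some; case: (ltngtP k m) => // h1.
    by move: (hlt _ h1); rewrite Rk.
  have := hk (inord m); rewrite inordK ?ltnS // h1 /= Rm //.
have := h (inord m); rewrite inordK ?ltnS // Rm /=.
have -> // : [forall j : 'I_N.+1, (j < m) ==> ~~ R j].
by apply/forallP => j; apply/implyP; exact: hlt.
Qed.

Lemma pick_min N (P Q : nat -> bool) : (forall k, Q k -> P k) ->
  (forall k, P k -> exists2 j, j <= k & Q j) -> (exists2 k, k <= N & Q k) ->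
  omap (@nat_of_ord _) [pick k : 'I_N.+1 | P k && [forall j : 'I_N.+1, (j < k) ==> ~~ P j]]
  = omap (@nat_of_ord _) [pick k : 'I_N.+1 | Q k && [forall j : 'I_N.+1, (j < k) ==> ~~ Q j]].
Proof.
move=> QP PQ [k0 hk0 Qk0].
have ex : exists k, Q k by exists k0.
have hm := ex_minnP ex.
case: hm => m Qm minm.
have mN : m <= N by apply: leq_trans (minm _ Qk0) hk0.
rewrite (@pick_eq_min N Q m) //; last first.
  by move=> j hj; apply/negP => Qj; have := minm _ Qj; rewrite leqNgt hj.
apply: pick_eq_min => //; first exact: QP.
move=> j hj; apply/negP => /PQ [j' hj' Qj'].
by have := minm _ Qj'; rewrite leqNgt (leq_ltn_trans hj' hj).
Qed.

Theorem lemma4p5 (T : finType) (M : matroid T) :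
  1 <= rank M ->
  (exists B1 B2, [/\ B1 \in bases M, B2 \in bases M & [disjoint B1 & B2]]) ->
  chi_KG M = borsuk M.
Proof.
move=> hr [B1 [B2 [h1 h2 hdis]]].
have hd := diam_bases h1 h2 hdis.
have hne : #|bases M| == 1 = false.
  apply/negbTE; rewrite neq_ltn; apply/orP; right.
  have : B1 != B2.
    apply/negP => /eqP e; move: hdis; rewrite e -setI_eq0 setIid -cards_eq0 (card_basis h2) => /eqP; lia.
  move=> hn12; have hc := cards2 B1 B2; rewrite hn12 in hc.
  apply: (@leq_trans #|[set B1; B2]|); first by rewrite hc.
  apply: subset_leq_card.
  by apply/subsetP => B; rewrite !inE => /orP [] /eqP ->.
rewrite /chi_KG /borsuk hne.
apply: pick_min.
- by move=> k; apply: colour_from_part.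
- by move=> k; apply: part_from_colour.
- exact: part_exists.
Qed.
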